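(* Let $X$ be a finite rack with connected components $C_1,\dots,C_k$. There exists $N$ (depending on $X$) such that for all integers $n_1,\dots,n_k\ge N$ with $n=n_1+\dots+n_k$, all nonnegative integers $m_1,\dots,m_k$ with $m=m_1+\dots+m_k$, and every $w\in X(m_1,\dots,m_k)/B_m$, the map \[ M_w:X^*(n_1,\dots,n_k)/B_n\to X^*(n_1+m_1,\dots,n_k+m_k)/B_{n+m},\qquad M_w(v)=wv \] (concatenation of representatives) is surjective.
   Context: A rack is a set $X$ with an operation $x^y$ such that $x\mapsto x^y$ is bijective for each $y$ and $(z^x)^y=(z^y)^{x^y}$. Its connected components are the classes of the smallest equivalence relation with $x\sim x^y$ for all $x,y$. $B_n$ (generators $\sigma_1,\dots,\sigma_{n-1}$) acts on $X^n$ from the right by $(\dots,x_i,x_{i+1},\dots)^{\sigma_i}=(\dots,x_{i+1},x_i^{x_{i+1}},\dots)$. For nonnegative integers $n_1,\dots,n_k$, $X(n_1,\dots,n_k)$ is the set of $(x_1,\dots,x_n)\in X^n$ with exactly $n_j$ entries in $C_j$ for each $j$, and $X^*(n_1,\dots,n_k)$ is the subset of those whose entries generate $X$ (i.e. lie in no proper subset $X_0$ closed under $x^y$); both are $B_n$-stable. Concatenation of tuples is compatible with $B_m\times B_{n}\hookrightarrow B_{m+n}$, giving a well-defined product of orbits. *)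

(* Defs.v *)
From mathcomp Require Import all_boot.
From Stdlib Require Import Relations.Relation_Operators.

Set Implicit Arguments.
Unset Strict Implicit.
Unset Printing Implicit Defensive.

(* A rack structure on a type X: op x y denotes x^y. *)
Definition is_rack (X : Type) (op : X -> X -> X) : Prop :=
  (forall y : X, bijective (fun x => op x y)) /\
  (forall x y z : X, op (op z x) y = op (op z y) (op x y)).

Definition rack_step (X : finType) (op : X -> X -> X) : rel X :=
  fun a b => [exists c, b == op a c].

Definition rack_step_sym (X : finType) (op : X -> X -> X) : rel X :=
  fun a b => rack_step op a b || rack_step op b a.

Definition rack_conn (X : finType) (op : X -> X -> X) : rel X :=
  connect (rack_step_sym op).

Definition rack_components (X : finType) (op : X -> X -> X) : {set {set X}} :=
  [set [set y | rack_conn op x y] | x : X].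

(* X(n_C)_C : tuples with exactly n C entries in each component C. *)
Definition in_Xcount (X : finType) (op : X -> X -> X) (n : {set X} -> nat)
    (s : seq X) : Prop :=
  forall C, C \in rack_components op -> count (fun x => x \in C) s = n C.

Definition generates (X : finType) (op : X -> X -> X) (s : seq X) : Prop :=
  forall X0 : {set X},
    (forall x y, x \in X0 -> y \in X0 -> op x y \in X0) ->
    {subset s <= X0} -> X0 = [set: X].

Definition in_Xstar (X : finType) (op : X -> X -> X) (n : {set X} -> nat)
    (s : seq X) : Prop :=
  in_Xcount op n s /\ generates op s.

Definition braid_step (X : Type) (op : X -> X -> X) (s t : seq X) : Prop :=
  exists (pre post : seq X) (x y : X),
    s = pre ++ x :: y :: post /\ t = pre ++ y :: op x y :: post.

(* Being in the same B_n-orbit: equivalence relation generated by the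
   generator moves (i.e. the orbit relation of the group they generate). *)
Definition braid_equiv (X : Type) (op : X -> X -> X) : seq X -> seq X -> Prop :=
  clos_refl_sym_trans (seq X) (braid_step op).

(* Main.v *)
Require Import Defs.
From mathcomp Require Import all_boot.
From mathcomp Require Import fingroup perm cyclic.
From Stdlib Require Import Relations.Relation_Operators ClassicalEpsilon.

Set Implicit Arguments.
Unset Strict Implicit.
Unset Printing Implicit Defensive.

Section Braid.
Variables (X : Type) (op : X -> X -> X).
Local Notation beq := (braid_equiv op).

Lemma beq_refl s : beq s s. Proof. exact: rst_refl. Qed.
Lemma beq_sym s t : beq s t -> beq t s. Proof. exact: rst_sym. Qed.
Lemma beq_trans s t r : beq s t -> beq t r -> beq s r.
Proof. exact: rst_trans. Qed.

Lemma beq_ctx p q s t : beq s t -> beq (p ++ s ++ q) (p ++ t ++ q).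
Proof.
elim=> {s t} [s t [pre [post [x [y [-> ->]]]]]| s | s t _ IH | s t r _ IH1 _ IH2].
- apply: rst_step; exists (p ++ pre), (post ++ q), x, y.
  by rewrite -!catA.
- exact: beq_refl.
- exact: beq_sym.
- exact: beq_trans IH2.
Qed.

Lemma beq_cons a s t : beq s t -> beq (a :: s) (a :: t).
Proof. by move=> H; have := beq_ctx [:: a] [::] H; rewrite !cats0. Qed.

Lemma beq_catr q s t : beq s t -> beq (s ++ q) (t ++ q).
Proof. by move=> H; have := beq_ctx [::] q H. Qed.

Lemma beq_catl p s t : beq s t -> beq (p ++ s) (p ++ t).
Proof. by move=> H; have := beq_ctx p [::] H; rewrite !cats0. Qed.

Lemma beq_swap x y post : beq (x :: y :: post) (y :: op x y :: post).
Proof. by apply: rst_step; exists [::], post, x, y. Qed.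

Lemma pass_right a B : beq (a :: B) (B ++ [:: foldl op a B]).
Proof.
elim: B a => [|b B IH] a /=; first exact: beq_refl.
apply: beq_trans (beq_swap a b B) _; apply: beq_cons; exact: IH.
Qed.

Lemma move_left A q : beq (A ++ [:: q]) (q :: map (fun a => op a q) A).
Proof.
elim: A => [|a A IH] /=; first exact: beq_refl.
apply: beq_trans (beq_cons a IH) _; exact: beq_swap.
Qed.

Lemma extract t m : exists t', beq t (mask m t ++ t').
Proof.
elim: t m => [|a t IH] [|b m] /=.
- by exists [::]; exact: beq_refl.
- by exists [::]; exact: beq_refl.
- by exists (a :: t); exact: beq_refl.
- have [t' H] := IH m; case: b.
  + by exists t'; exact: beq_cons.
  + exists (foldl op a (mask m t) :: t').
    apply: beq_trans (beq_cons a H) _.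
    by have := beq_catr t' (pass_right a (mask m t)); rewrite -catA.
Qed.

End Braid.

Definition Mx (X : finType) := #|[set: {perm X}]|.

Lemma Mx_gt0 (X : finType) : 0 < Mx X.
Proof. by apply/card_gt0P; exists 1%g; rewrite in_setT. Qed.

Lemma iterM (X : finType) (f : X -> X) : injective f -> forall y, iter (Mx X) f y = y.
Proof.
move=> fi y.
have := expg_cardG (in_setT (perm fi)).
move/(congr1 (fun p : {perm X} => p y)); rewrite permX perm1 => H.
by rewrite -[RHS]H; apply: eq_iter => z; rewrite permE.
Qed.

Definition asb (P : Prop) : bool :=
  if excluded_middle_informative P then true else false.
Lemma asbP P : asb P -> P.
Proof. by rewrite /asb; case: excluded_middle_informative. Qed.
Lemma asbT (P : Prop) : P -> asb P.
Proof. by rewrite /asb; case: excluded_middle_informative. Qed.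

Lemma filter_pred1_nseq (T : eqType) (z : T) (s : seq T) :
  filter (pred1 z) s = nseq (count (pred1 z) s) z.
Proof.
elim: s => //= a s ->; by case: eqP => [->|_] /=; rewrite ?add1n ?add0n.
Qed.

Lemma pigeon (T : finType) (A : {set T}) (s : seq T) k :
  (forall z, z \in A -> count (pred1 z) s <= k) ->
  count (fun y => y \in A) s <= #|A| * k.
Proof.
move=> H.
suff: count (fun y => y \in A) s <= \sum_(z in A) count (pred1 z) s.
  move/leq_trans; apply; rewrite -sum_nat_const; exact: leq_sum.
elim: s {H} => [|a s IH] /=; first by [].
rewrite big_split /=.
apply: leq_add => //.
case aA: (a \in A) => //.
by rewrite (bigD1 a) //= eqxx.
Qed.

Section Rack.
Variables (X : finType) (op : X -> X -> X) (Hrack : is_rack op).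
Local Notation beq := (braid_equiv op).
Local Notation M := (Mx X).

Lemma phi_inj c : injective (fun y => op y c).
Proof. exact: bij_inj (proj1 Hrack c). Qed.

Lemma iterMop c y : iter M (fun y => op y c) y = y.
Proof. exact: iterM (@phi_inj c) y. Qed.

Lemma op_iter c y : op (iter M.-1 (fun y => op y c) y) c = y.
Proof.
have := iterS M.-1 (fun y => op y c) y.
by rewrite prednK ?Mx_gt0 // iterMop /= => H; exact: esym H.
Qed.

Lemma iter_op c y : iter M.-1 (fun y => op y c) (op y c) = y.
Proof.
have := iterSr M.-1 (fun y => op y c) y.
by rewrite prednK ?Mx_gt0 // iterMop /= => H; exact: esym H.
Qed.

Lemma comp_op C c y : C \in rack_components op -> (op y c \in C) = (y \in C).
Proof.
move=> /imsetP [a _ ->]; rewrite !inE; apply/idP/idP => H.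
- apply: connect_trans H (connect1 _); apply/orP; right; apply/existsP; exists c; by [].
- apply: connect_trans H (connect1 _); apply/orP; left; apply/existsP; exists c; by [].
Qed.

Lemma comp_mem x : [set y | rack_conn op x y] \in rack_components op.
Proof. by apply/imsetP; exists x. Qed.

Lemma conn_sym a b : rack_conn op a b -> rack_conn op b a.
Proof.
have Hs : symmetric (rack_step_sym op) by move=> u v; rewrite /rack_step_sym orbC.
by rewrite /rack_conn (sym_connect_sym Hs).
Qed.

Lemma count_beq C s t : C \in rack_components op -> beq s t ->
  count (fun x => x \in C) s = count (fun x => x \in C) t.
Proof.
move=> HC; elim => {s t} [s t [pre [post [x [y [-> ->]]]]] | s | s t _ -> | s t r _ -> _ ->] //.
rewrite !count_cat /= (comp_op _ _ HC); congr (_ + _); exact: addnCA.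
Qed.

Lemma gen_sub s t : generates op s -> {subset s <= t} -> generates op t.
Proof. move=> Hs st X0 Hc Ht; apply: Hs Hc _ => z /st /Ht //. Qed.

Lemma foldl_nseq (a q : X) L : foldl op q (nseq L a) = iter L (fun y => op y a) q.
Proof. by elim: L q => // L IH q /=; rewrite IH -iterSr. Qed.

Lemma transp y Q : beq (Q ++ nseq M y) (nseq M y ++ Q).
Proof.
elim: Q => [|q Q IH] /=; first by rewrite cats0; exact: beq_refl.
apply: beq_trans (beq_cons q IH) _.
by have := beq_catr Q (pass_right op q (nseq M y)); rewrite foldl_nseq iterMop -catA.
Qed.

Lemma walk y R1 : beq (nseq M y ++ R1) (R1 ++ nseq M (foldl op y R1)).
Proof.
elim: R1 y => [|q R1 IH] y /=; first by rewrite cats0; exact: beq_refl.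
have := beq_catr R1 (move_left op (nseq M y) q); rewrite -catA map_nseq /= => H.
apply: beq_trans H _; apply: beq_cons; exact: IH.
Qed.

Lemma walk2 y R1 R2 : beq (nseq M y ++ R1 ++ R2) (nseq M (foldl op y R1) ++ R1 ++ R2).
Proof.
by have := beq_catr R2 (beq_trans (walk y R1) (transp _ R1)); rewrite -!catA.
Qed.

Lemma foldl_inj s : injective (fun y => foldl op y s).
Proof.
elim: s => [|q s IH] a b //= /IH; exact: phi_inj.
Qed.

Lemma reach z x R : generates op R -> rack_conn op z x ->
  beq (nseq M z ++ R) (nseq M x ++ R).
Proof.
move=> HR Hzx.
pose Reach y := beq (nseq M z ++ R) (nseq M y ++ R).
have closF : forall R1 R2 y, R = R1 ++ R2 -> Reach y -> Reach (foldl op y R1).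
  move=> R1 R2 y HR12 Hy; apply: beq_trans Hy _; rewrite HR12; exact: walk2.
have closIt : forall (f : X -> X) n y, (forall y, Reach y -> Reach (f y)) ->
    Reach y -> Reach (iter n f y).
  move=> f n y Hf; elim: n => //= n IH /IH; exact: Hf.
pose T := [set c | asb (forall y, Reach y -> Reach (op y c))].
have Tall : T = setT.
  apply: HR.
  - move=> a b; rewrite !inE => /asbP Ha /asbP Hb; apply: asbT => y Hy.
    have Hz := closIt _ M.-1 y Hb Hy.
    by have := Hb _ (Ha _ Hz); rewrite (proj2 Hrack) op_iter.
  - move=> r Hr; rewrite inE; apply: asbT => y Hy.
    pose R1 := take (index r R) R; pose R2 := drop (index r R).+1 R.
    have HRs : R = R1 ++ r :: R2.
      have E : r :: R2 = drop (index r R) R.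
        by rewrite /R2 [RHS](drop_nth r) ?index_mem // nth_index.
      by rewrite E /R1 cat_take_drop.
    have C1 : forall y, Reach y -> Reach (foldl op y R1).
      by move=> y' Hy'; apply: closF HRs Hy'.
    have C2 : forall y, Reach y -> Reach (foldl op y (rcons R1 r)).
      by move=> y' Hy'; apply: (closF (rcons R1 r) R2) Hy'; rewrite cat_rcons.
    have Hy' := C2 _ (closIt _ M.-1 y C1 Hy).
    rewrite foldl_rcons in Hy'.
    have E : foldl op (iter M.-1 (fun y0 => foldl op y0 R1) y) R1 = y.
      have := iterS M.-1 (fun y0 => foldl op y0 R1) y.
      by rewrite prednK ?Mx_gt0 // (iterM (@foldl_inj R1)) /= => H; exact: esym H.
    by rewrite E in Hy'.
have closOp : forall c y, Reach y -> Reach (op y c).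
  move=> c; have : c \in T by rewrite Tall in_setT.
  by rewrite inE => /asbP.
have [p Hp ->] := connectP Hzx.
have gen : forall p a, Reach a -> path (rack_step_sym op) a p -> Reach (last a p).
  elim=> [|b p' IH] a Ha //= /andP [Hab Hp'].
  apply: IH Hp'.
  case/orP: Hab => /existsP [c /eqP Hc].
  - by rewrite Hc; exact: closOp.
  - by have := closIt _ M.-1 _ (closOp c) Ha; rewrite Hc iter_op.
by apply: gen Hp; exact: beq_refl.
Qed.

Lemma KL t x : generates op t ->
  #|X| + #|X| * M <= count (fun y => y \in [set y | rack_conn op x y]) t ->
  exists t', beq t (x :: t') /\ generates op t'.
Proof.
set C := [set y | rack_conn op x y] => Hg Hn.
have HC : C \in rack_components op by exact: comp_mem.
have [m _ Hm] := subseqP (undup_subseq t).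
have [t1 Ht1] := extract op t m; rewrite -Hm in Ht1.
have Hcnt : count (fun y => y \in C) t =
   count (fun y => y \in C) (undup t) + count (fun y => y \in C) t1.
  by rewrite (count_beq HC Ht1) count_cat.
have Hu : count (fun y => y \in C) (undup t) <= #|X|.
  apply: leq_trans (count_size _ _) _.
  by rewrite -(card_uniqP (undup_uniq t)); exact: max_card.
have H1 : #|X| * M <= count (fun y => y \in C) t1.
  by rewrite -(leq_add2l #|X|); apply: leq_trans Hn _; rewrite Hcnt leq_add2r.
have [z zC Hz] : exists2 z, z \in C & M <= count (pred1 z) t1.
  case: (boolP [exists z in C, M <= count (pred1 z) t1]).
    by case/exists_inP => z; exists z.
  rewrite negb_exists_in => /forall_inP Hall.
  have Hx : 0 < #|X| by apply/card_gt0P; exists x.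
  have Hp : count (fun y => y \in C) t1 <= #|C| * M.-1.
    apply: pigeon => z' /Hall; rewrite -ltnNge => H.
    by rewrite -ltnS prednK ?Mx_gt0.
  have Hlt : #|C| * M.-1 < #|X| * M.
    apply: leq_ltn_trans (leq_mul (max_card _) (leqnn _)) _.
    by rewrite ltn_mul2l Hx /= prednK ?Mx_gt0.
  by move: (leq_ltn_trans (leq_trans H1 Hp) Hlt); rewrite ltnn.
have [t2 Ht2] := extract op t1 [seq pred1 z y | y <- t1].
rewrite -filter_mask filter_pred1_nseq -(subnKC Hz) nseqD -catA in Ht2.
set R := undup t ++ nseq (count (pred1 z) t1 - M) z ++ t2.
have HtR : beq t (nseq M z ++ R).
  apply: beq_trans Ht1 _; apply: beq_trans (beq_catl _ Ht2) _.
  by have := beq_catr (nseq (count (pred1 z) t1 - M) z ++ t2) (transp z (undup t));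
     rewrite -!catA.
have HR : generates op R.
  apply: gen_sub Hg _ => y; rewrite -mem_undup => Hy; by rewrite mem_cat Hy.
have Hzx : rack_conn op z x by apply: conn_sym; move: zC; rewrite inE.
have := beq_trans HtR (reach HR Hzx).
rewrite -(prednK (Mx_gt0 X)) /= => H.
exists (nseq M.-1 x ++ R); split => //.
by apply: gen_sub HR _ => y Hy; rewrite mem_cat Hy orbT.
Qed.

End Rack.

Theorem proposition4p22 (X : finType) (op : X -> X -> X) (Hrack : is_rack op) :
  exists N : nat,
    forall (n m : {set X} -> nat),
      (forall C, C \in rack_components op -> N <= n C) ->
      forall w : seq X, in_Xcount op m w ->
      forall u : seq X, in_Xstar op (fun C => n C + m C) u ->
      exists v : seq X, in_Xstar op n v /\ braid_equiv op (w ++ v) u.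
Proof.
exists (#|X| + #|X| * Mx X) => n m Hn w Hw u [Hu Hgen].
suff main : forall w u, generates op u ->
    (forall C, C \in rack_components op ->
       count (fun x => x \in C) u = n C + count (fun x => x \in C) w) ->
    exists v, (generates op v /\ forall C, C \in rack_components op ->
       count (fun x => x \in C) v = n C) /\ braid_equiv op (w ++ v) u.
  have [v [[Hv1 Hv2] Hv3]] := main w u Hgen (fun C HC => etrans (Hu C HC) (congr1 _ (esym (Hw C HC)))).
  by exists v; split => //; split.
elim=> [|x w' IH] u' Hg Hc.
- exists u'; split; last exact: beq_refl.
  by split => // C HC; rewrite (Hc C HC); apply: addn0.
- set C0 := [set y | rack_conn op x y].
  have HC0 : C0 \in rack_components op by exact: comp_mem.
  have Hle : #|X| + #|X| * Mx X <= count (fun y => y \in C0) u'.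
    by rewrite (Hc _ HC0); apply: leq_trans (Hn _ HC0) (leq_addr _ _).
  have [t' [Ht Hg']] := KL Hrack Hg Hle.
  have Hc' : forall C, C \in rack_components op ->
      count (fun y => y \in C) t' = n C + count (fun y => y \in C) w'.
    move=> C HC; have := count_beq HC Ht; rewrite (Hc _ HC) /= addnCA => /eqP.
    by rewrite eqn_add2l => /eqP ->.
  have [v [Hv Hbe]] := IH t' Hg' Hc'.
  exists v; split => //=.
  apply: beq_trans (beq_cons x Hbe) _; exact: beq_sym.
Qed.
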